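(* The family $\mathfrak{F}^*=\{\tilde{\omega},\tilde{\omega^*}\}\cup\{\tilde{L}_n:n\geq 2\}$ is $\mathbf{PL}$-learnable.
   Context: Partial orders are structures in the language $\{\leq\}$. $\omega$ and $\omega^*$ are the linear orders of the natural numbers and of the negative integers; $L_n$ is the finite linear order with $n$ elements. For a partial order $L$, $\tilde{L}$ is $L$ together with infinitely many new elements that are pairwise incomparable and incomparable to the elements of $L$ (presented with domain $\mathbb{N}$). All structures have domain $\mathbb{N}$ and are identified with their atomic diagrams. For a family $\mathfrak{K}$ (countable set of pairwise nonisomorphic structures), $\mathcal{S}\restriction_s$ is the finite substructure of $\mathcal{S}$ on $\{0,\dots,s\}$ and $\mathrm{LD}(\mathfrak{K})$ is the set of structures with domain $\mathbb{N}$ isomorphic to a member of $\mathfrak{K}$. A learner is an arbitrary function from $\{\mathcal{S}\restriction_s:\mathcal{S}\in\mathrm{LD}(\mathfrak{K})\}$ to $\{\ulcorner\mathcal{A}\urcorner:\mathcal{A}\in\mathfrak{K}\}\cup\{?\}$. $\mathfrak{K}$ is $\mathbf{PL}$-learnable if some learner $\mathbf{M}$ satisfies: for every $\mathcal{S}\in\mathrm{LD}(\mathfrak{K})$ and $\mathcal{A}\in\mathfrak{K}$, $\{n:\mathbf{M}(\mathcal{S}\restriction_n)=\ulcorner\mathcal{A}\urcorner\}$ is infinite iff $\mathcal{A}\cong\mathcal{S}$. *)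

(* Defs.v *)
From mathcomp Require Import all_boot.
Set Implicit Arguments. Unset Strict Implicit. Unset Printing Implicit Defensive.

(* A structure in the language {<=} with domain nat, identified with its
   atomic diagram: the characteristic function of the relation <=. *)
Definition structure := nat -> nat -> bool.

Definition iso (S A : structure) : Prop :=
  exists f : nat -> nat, bijective f /\ forall x y, S x y = A (f x) (f y).

(* Members with "tilde": even numbers carry the partial order L, odd numbers
   are the infinitely many new pairwise incomparable elements. *)

Definition omega_t : structure := fun x y =>
  if odd x || odd y then x == y else x./2 <= y./2.

Definition omegastar_t : structure := fun x y =>
  if odd x || odd y then x == y else y./2 <= x./2.

Definition Ln_t (n : nat) : structure := fun x y =>
  if (x < n) && (y < n) then x <= y else x == y.

Definition Fstar (i : nat) : structure :=
  match i with
  | 0 => omega_t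
  | 1 => omegastar_t
  | n => Ln_t n
  end.

Definition LD (S : structure) : Prop := exists i, iso S (Fstar i).

Definition finsub (s : nat) := {ffun 'I_s.+1 -> {ffun 'I_s.+1 -> bool}}.
Definition restr (S : structure) (s : nat) : finsub s :=
  [ffun i : 'I_s.+1 => [ffun j : 'I_s.+1 => S i j]].

(* A learner: arbitrary function from finite substructures to codes of
   members of the family (Some i) or '?' (None). *)
Definition learner := forall s : nat, finsub s -> option nat.

Definition infinitely_often (P : nat -> Prop) : Prop :=
  forall m, exists n, m <= n /\ P n.

Definition PL_learnable_Fstar : Prop :=
  exists M : learner, forall S : structure, LD S ->
    forall i : nat,
      infinitely_often (fun n => M n (restr S n) = Some i) <-> iso S (Fstar i).

(* Main.v *)
Require Import Defs.
From mathcomp Require Import all_boot.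
From mathcomp Require Import zify.

Definition rd (s : nat) (F : finsub s) : structure := fun x y =>
  match @insub nat (fun z => z < s.+1) 'I_s.+1 x,
        @insub nat (fun z => z < s.+1) 'I_s.+1 y with
  | Some i, Some j => F i j | _, _ => false end.

Definition cmp (S : structure) x y := (x != y) && (S x y || S y x).
Definition chain S s x := has (cmp S x) (iota 0 s.+1).
Definition cnt S s := count (chain S s) (iota 0 s.+1).
Definition newc S s := has (cmp S s) (iota 0 s).
Definition newmax S s := all (fun y => cmp S y s ==> S y s) (iota 0 s).
Definition newmin S s := all (fun y => cmp S y s ==> S s y) (iota 0 s).
Definition G S s : option nat :=
  if newc S s then (if newmax S s then Some 0 else if newmin S s then Some 1 else None)
  else if 2 <= cnt S s then Some (cnt S s) else None.

Arguments rd {s}.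
Definition Mlearn : learner := fun s F => G (rd F) s.

Lemma rd_restr S s x y : x <= s -> y <= s -> rd (restr S s) x y = S x y.
Proof.
move=> hx hy; rewrite /rd.
rewrite (insubT (fun z => z < s.+1) (hx : x < s.+1)).
rewrite (insubT (fun z => z < s.+1) (hy : y < s.+1)).
by rewrite /restr !ffunE.
Qed.

Lemma G_ext S1 S2 s : (forall x y, x <= s -> y <= s -> S1 x y = S2 x y) ->
  G S1 s = G S2 s.
Proof.
move=> h.
have hc : forall x y, x <= s -> y <= s -> cmp S1 x y = cmp S2 x y.
  by move=> x y hx hy; rewrite /cmp !h.
have hn : newc S1 s = newc S2 s.
  apply: eq_in_has => y; rewrite mem_iota add0n => /andP[_ hy].
  by apply: hc => //; apply: ltnW.
have hmx : newmax S1 s = newmax S2 s.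
  apply: eq_in_all => y; rewrite mem_iota add0n => /andP[_ hy].
  by rewrite hc ?h //; apply: ltnW.
have hmn : newmin S1 s = newmin S2 s.
  apply: eq_in_all => y; rewrite mem_iota add0n => /andP[_ hy].
  by rewrite hc ?h //; apply: ltnW.
have hcn : cnt S1 s = cnt S2 s.
  apply: eq_in_count => x; rewrite mem_iota add0n => /andP[_ hx].
  apply: eq_in_has => y; rewrite mem_iota add0n => /andP[_ hy].
  by apply: hc.
by rewrite /G hn hmx hmn hcn.
Qed.

Lemma M_G S s : Mlearn s (restr S s) = G S s.
Proof. by apply: G_ext => x y; apply: rd_restr. Qed.

Lemma cmp_iso (S A : structure) f : injective f ->
  (forall x y, S x y = A (f x) (f y)) -> forall x y, cmp S x y = cmp A (f x) (f y).
Proof. by move=> fi h x y; rewrite /cmp !h (inj_eq fi). Qed.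

Lemma cmpO a b : cmp omega_t a b = (a != b) && ~~ odd a && ~~ odd b.
Proof.
rewrite /cmp /omega_t; case: (boolP (odd a)) => oa; case: (boolP (odd b)) => ob /=;
  rewrite ?andbF ?andbT ?(eq_sym b a); try by case: (a == b).
by rewrite leq_total andbT.
Qed.

Lemma cmpOs a b : cmp omegastar_t a b = (a != b) && ~~ odd a && ~~ odd b.
Proof.
rewrite /cmp /omegastar_t; case: (boolP (odd a)) => oa; case: (boolP (odd b)) => ob /=;
  rewrite ?andbF ?andbT ?(eq_sym b a); try by case: (a == b).
by rewrite leq_total andbT.
Qed.

Lemma cmpL n a b : cmp (Ln_t n) a b = (a != b) && (a < n) && (b < n).
Proof.
rewrite /cmp /Ln_t; case: (boolP (a < n)) => ha; case: (boolP (b < n)) => hb /=;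
  rewrite ?andbF ?andbT ?(eq_sym b a); try by case: (a == b).
by rewrite leq_total andbT.
Qed.

Lemma bound (h : nat -> nat) M : exists N, forall i, i <= M -> h i <= N.
Proof.
elim: M => [|M [N hN]]; first by exists (h 0) => i; rewrite leqn0 => /eqP ->.
exists (maxn N (h M.+1)) => i; rewrite leq_eqVlt => /orP[/eqP ->|hi].
  by rewrite leq_maxr.
by apply: leq_trans (leq_maxl _ _); apply: hN.
Qed.

Lemma cnt_grow (S A : structure) f g : cancel f g -> cancel g f ->
  (forall x y, S x y = A (f x) (f y)) ->
  (forall a b, cmp A a b = (a != b) && ~~ odd a && ~~ odd b) ->
  forall k, exists N, forall s, N <= s -> k < cnt S s.
Proof.
move=> fK gK hS hA k.
have fi : injective f := can_inj fK.
have gi : injective g := can_inj gK.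
have [N hN] := bound (fun i => g i.*2) k.+1.
exists N => s hs.
set L := map (fun i => g i.*2) (iota 0 k.+2).
have hL : size L = k.+2 by rewrite size_map size_iota.
apply: (@leq_trans k.+2) => //.
rewrite -hL /cnt -size_filter; apply: uniq_leq_size.
  rewrite map_inj_uniq ?iota_uniq // => i j /gi; exact: double_inj.
move=> x /mapP [i]; rewrite mem_iota add0n => /andP [_ hi] ->.
have hx : g i.*2 <= s by apply: leq_trans hs; apply: hN.
rewrite mem_filter mem_iota add0n ltnS hx andbT.
rewrite andbT /chain; apply/hasP; exists (g (if i == 0 then 2 else 0)).
  rewrite mem_iota add0n ltnS; apply: leq_trans hs.
  by case: (i == 0); [exact: (hN 1) | exact: (hN 0)].
rewrite (cmp_iso _ _ _ fi hS) !gK hA odd_double /=.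
case: (i =P 0) => [-> //|/eqP hi0].
by rewrite -double0 (inj_eq double_inj) hi0.
Qed.

Lemma caseL n (S : structure) f g : cancel f g -> cancel g f ->
  (forall x y, S x y = Ln_t n.+2 (f x) (f y)) ->
  exists N, forall s, N < s -> G S s = Some n.+2.
Proof.
move=> fK gK hS.
have fi : injective f := can_inj fK.
have gi : injective g := can_inj gK.
have [N hN] := bound g n.+1.
exists N => s hs.
have hc := cmp_iso _ _ _ fi hS.
have hnc : newc S s = false.
  apply/hasPn => y _; rewrite hc cmpL.
  case: (ltnP (f s) n.+2) => h; last by rewrite andbF.
  have := hN (f s) h; rewrite fK => /(leq_ltn_trans)/(_ hs); by rewrite ltnn.
have hcnt : cnt S s = n.+2.
  rewrite /cnt (@eq_in_count _ _ (fun x => f x < n.+2)); last first.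
    move=> x _; rewrite /chain.
    case: (ltnP (f x) n.+2) => h.
      apply/hasP; exists (g (if f x == 0 then 1 else 0)).
        rewrite mem_iota add0n ltnS; apply: leq_trans (ltnW hs).
        by case: (f x == 0); apply: hN.
      rewrite hc gK cmpL h.
      by case: (f x =P 0) => [->|/eqP ->].
    apply/hasPn => y _; rewrite hc cmpL.
    by rewrite ltnNge h andbF.
  apply/eqP; rewrite eqn_leq -!size_filter; apply/andP; split.
    rewrite -(size_map f) -{2}(size_iota 0 n.+2); apply: uniq_leq_size.
      by rewrite map_inj_uniq ?filter_uniq ?iota_uniq.
    move=> a /mapP [x]; rewrite mem_filter => /andP [h _] ->.
    by rewrite mem_iota add0n.
  rewrite -{1}(size_iota 0 n.+2) -(size_map g); apply: uniq_leq_size.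
    by rewrite map_inj_uniq ?iota_uniq.
  move=> x /mapP [a]; rewrite mem_iota add0n => /andP [_ ha] ->.
  rewrite mem_filter gK ha mem_iota add0n ltnS /=.
  by apply: leq_trans (ltnW hs); apply: hN.
by rewrite /G hnc hcnt.
Qed.

Lemma record f g : cancel f g -> cancel g f -> forall m, exists s,
  [/\ m <= s, g 0 < s, ~~ odd (f s), 0 < f s &
    forall y, y < s -> ~~ odd (f y) -> f y < f s].
Proof.
move=> fK gK m.
have [B hB] := bound f (maxn m (g 0)).
pose b := B.+1.*2.
have ex : exists x, ~~ odd (f x) && (b <= f x).
  by exists (g b); rewrite gK odd_double leqnn.
case: (ex_minnP ex) => s /andP [es bs] hmin.
have hBb : B < b by rewrite /b -addnn addSn ltnS leq_addr.
have hs : maxn m (g 0) < s.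
  rewrite ltnNge; apply/negP => h.
  have := leq_trans bs (hB _ h); rewrite leqNgt hBb //.
exists s; split => //.
- by apply: leq_trans (ltnW hs); apply: leq_maxl.
- by apply: leq_ltn_trans hs; apply: leq_maxr.
- by apply: leq_trans bs.
move=> y hy ey; apply: leq_trans bs.
rewrite ltnNge; apply/negP => h.
have := hmin y; rewrite ey h => /(_ isT); by rewrite leqNgt hy.
Qed.

Lemma half_pos a : ~~ odd a -> 0 < a -> 0 < a./2.
Proof.
move=> ea ha; rewrite lt0n; apply/negP => /eqP h.
by move: ha; rewrite -(even_halfK ea) h.
Qed.

Lemma caseO (S : structure) f g : cancel f g -> cancel g f ->
  (forall x y, S x y = omega_t (f x) (f y)) ->
  (forall m, exists s, m <= s /\ G S s = Some 0) /\
  (forall s, g 0 < s -> G S s <> Some 1).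
Proof.
move=> fK gK hS.
have fi : injective f := can_inj fK.
have hc := cmp_iso _ _ _ fi hS.
split.
  move=> m; have [s [hm h0 es ps hy]] := record _ _ fK gK m.
  exists s; split => //.
  rewrite /G; have -> : newc S s.
    apply/hasP; exists (g 0); first by rewrite mem_iota.
    by rewrite hc gK cmpO es /= andbT -lt0n ps.
  suff -> : newmax S s by [].
  apply/allP => y; rewrite mem_iota add0n => hys; apply/implyP.
  rewrite hc cmpO => /andP [/andP [_ ey] _].
  rewrite hS /omega_t (negbTE ey) (negbTE es) /=.
  by apply: half_leq; apply: ltnW; apply: hy.
move=> s hs; rewrite /G.
case hn: (newc S s); last first.
  by case: ifP => // h [] e; move: h; rewrite e.
have hmin : newmin S s = false.
  move/hasP: hn => [y _]; rewrite hc cmpO => /andP [/andP [_ es] _].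
  apply/negP => /allP /(_ (g 0)); rewrite mem_iota hs => /(_ isT).
  rewrite hc gK cmpO es /= andbT hS gK /omega_t (negbTE es) /=.
  have fs0 : f s != 0.
    apply/negP => /eqP e; move: hs; by rewrite -e fK ltnn.
  rewrite eq_sym fs0 /= leqn0 => /eqP h.
  by move: fs0; rewrite -(even_halfK es) h.
by case: (newmax S s); rewrite // hmin.
Qed.

Lemma caseOs (S : structure) f g : cancel f g -> cancel g f ->
  (forall x y, S x y = omegastar_t (f x) (f y)) ->
  (forall m, exists s, m <= s /\ G S s = Some 1) /\
  (forall s, g 0 < s -> G S s <> Some 0).
Proof.
move=> fK gK hS.
have fi : injective f := can_inj fK.
have hc := cmp_iso _ _ _ fi hS.
have key : forall s, g 0 < s -> ~~ odd (f s) -> newmax S s = false.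
  move=> s hs es.
  apply/negP => /allP /(_ (g 0)); rewrite mem_iota hs => /(_ isT).
  have fs0 : f s != 0.
    apply/negP => /eqP e; move: hs; by rewrite -e fK ltnn.
  rewrite hc gK cmpOs es /= andbT hS gK /omegastar_t (negbTE es) /=.
  rewrite eq_sym fs0 /= leqn0 => /eqP h.
  by move: fs0; rewrite -(even_halfK es) h.
split.
  move=> m; have [s [hm h0 es ps hy]] := record _ _ fK gK m.
  exists s; split => //.
  rewrite /G; have -> : newc S s.
    apply/hasP; exists (g 0); first by rewrite mem_iota.
    by rewrite hc gK cmpOs es /= andbT -lt0n ps.
  rewrite key //.
  suff -> : newmin S s by [].
  apply/allP => y; rewrite mem_iota add0n => hys; apply/implyP.
  rewrite hc cmpOs => /andP [/andP [_ ey] _].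
  rewrite hS /omegastar_t (negbTE ey) (negbTE es) /=.
  by apply: half_leq; apply: ltnW; apply: hy.
move=> s hs; rewrite /G.
case hn: (newc S s); last first.
  by case: ifP => // h [] e; move: h; rewrite e.
move/hasP: hn => [y _]; rewrite hc cmpOs => /andP [/andP [_ es] _].
by rewrite key //; case: (newmin S s).
Qed.

Lemma big_not S i s : 2 <= i -> i < cnt S s -> G S s <> Some i.
Proof.
move=> hi hc; rewrite /G.
case: (newc S s); first by case: (newmax S s); case: (newmin S s) => // [] [] e;
  move: hi; rewrite -e.
case: ifP => // _ [] e; by move: hc; rewrite e ltnn.
Qed.

Definition IO S i := infinitely_often (fun n => Mlearn n (restr S n) = Some i).

Lemma key S j : iso S (Fstar j) ->
  IO S j /\ forall i, i <> j -> exists N, forall s, N < s -> G S s <> Some i.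
Proof.
move=> [f [[g fK gK] hS]].
rewrite /IO /infinitely_often.
case: j hS => [|[|n]] /= hS.
- have [h1 h2] := caseO _ _ _ fK gK hS.
  split; first by move=> m; have [s [? ?]] := h1 m; exists s; rewrite M_G.
  case=> [//|[_|i _]]; first by exists (g 0).
  have [N hN] := cnt_grow _ _ _ _ fK gK hS cmpO i.+2.
  by exists N => s hs; apply: big_not => //; apply: hN; apply: ltnW.
- have [h1 h2] := caseOs _ _ _ fK gK hS.
  split; first by move=> m; have [s [? ?]] := h1 m; exists s; rewrite M_G.
  case=> [_|[//|i _]]; first by exists (g 0).
  have [N hN] := cnt_grow _ _ _ _ fK gK hS cmpOs i.+2.
  by exists N => s hs; apply: big_not => //; apply: hN; apply: ltnW.
- have [N hN] := caseL _ _ _ _ fK gK hS.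
  split.
    move=> m; exists (maxn m N).+1; rewrite M_G hN; last by rewrite ltnS leq_maxr.
    by split => //; apply: leq_trans (leq_maxl _ _) _.
  by move=> i hi; exists N => s hs; rewrite hN // => -[] e; apply: hi.
Qed.

Theorem mainTheorem17 : PL_learnable_Fstar.
Proof.
exists Mlearn => S [j hj] i; split; last by move/key => [].
move=> hio.
have [_ hne] := key _ _ hj.
case: (i =P j) => [-> //|/hne [N hN]].
have [s [hs e]] := hio N.+1.
by rewrite M_G in e; case: (hN s hs e).
Qed.
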